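(* Let $1\le m\le n$ and set $A_{i,m}=\prod_{j=m,\,j\ne i}^n\frac{tx_i-x_j}{x_i-x_j}$ for $m\le i\le n$. Then for every symmetric Laurent polynomial $f$ in $x_1,\dots,x_n$, $$\sum_{i=m}^n D_if=\sum_{i=m}^n A_{i,m}\,x_i^{-1}\bigl(f-\tau_if\bigr).$$
   Context: Let $n\ge1$, $q,t$ generic parameters; operators act on Laurent polynomials (or rational functions) in $x=(x_1,\dots,x_n)$ over $\mathbb{Q}(q,t)$. Let $s_i$ interchange $x_i,x_{i+1}$, $(\tau_if)(x)=f(x_1,\dots,qx_i,\dots,x_n)$, $T_i=t+\frac{tx_i-x_{i+1}}{x_i-x_{i+1}}(s_i-1)$ (invertible, $T_i^{-1}=t^{-1}-1+t^{-1}T_i$), $\omega=s_{n-1}\cdots s_1\tau_1$, $Y_i=t^{-n+i}T_i\cdots T_{n-1}\,\omega\,T_1^{-1}\cdots T_{i-1}^{-1}$, $T_{ij}^{-1}=T_i^{-1}\cdots T_{j-2}^{-1}T_{j-1}^{-1}T_{j-2}^{-1}\cdots T_i^{-1}$ for $i<j$, and $D_i=x_i^{-1}\bigl(1-t^{n-1}[1+(t^{-1}-1)\sum_{j=i+1}^n t^{j-i}T_{ij}^{-1}]Y_i\bigr)$, $1\le i\le n$. *)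

(* Defs.v *)
From HB Require Import structures.
From mathcomp Require Import all_boot all_order all_algebra.
From mathcomp Require Import fingroup perm generic_quotient fraction.
From mathcomp Require Import mpoly.

Set Implicit Arguments.
Unset Strict Implicit.
Unset Printing Implicit Defensive.

Import GRing.Theory.
Local Open Scope ring_scope.

Notation "x %:F" := (@FracField.tofrac _ x) (format "x %:F").

(* Ground field Q(q,t) = fraction field of Q[q,t]; q = X_0, t = X_1. *)
Notation Kqt := {fraction {mpoly rat[2]}}.
Definition qpar : Kqt := ('X_(@Ordinal 2 0 isT))%:F.
Definition tpar : Kqt := ('X_(@Ordinal 2 1 isT))%:F.

(* Field of rational functions Q(q,t)(x_1,...,x_n); x_{j+1} = X_j, j : 'I_n. *)
Notation Fx n := {fraction {mpoly Kqt[n]}}.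

Section Ops.
Variable n : nat.
Local Notation F := (Fx n).
Local Notation P := {mpoly Kqt[n]}.

Definition liftF (phi : P -> P) (f : F) : F :=
  (phi (\n_(repr f)))%:F / (phi (\d_(repr f)))%:F.

Definition cst (c : Kqt) : F := (mpolyC n c)%:F.

(* the variable x_i (1-based), 0 if i is out of range *)
Definition xp (i : nat) : P := if (insub i.-1 : option 'I_n) is Some j then 'X_j else 0.
Definition xv (i : nat) : F := (xp i)%:F.

(* s_i : interchange x_i and x_{i+1} *)
Definition sop (i : nat) : F -> F :=
  liftF (comp_mpoly [tuple (if j.+1 == i then xp i.+1
                             else if j.+1 == i.+1 then xp i else 'X_j) | j < n]).

Definition tau (i : nat) : F -> F :=
  liftF (comp_mpoly [tuple (if j.+1 == i then qpar *: 'X_j else 'X_j) | j < n]).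

(* apply the operator product P_1 P_2 ... P_k (P_k acts first) *)
Definition prodop (l : seq (F -> F)) (g : F) : F := foldr (fun o h => o h) g l.

Definition Top (i : nat) (f : F) : F :=
  cst tpar * f + (cst tpar * xv i - xv i.+1) / (xv i - xv i.+1) * (sop i f - f).

Definition Tinv (i : nat) (f : F) : F :=
  (cst tpar)^-1 * f - f + (cst tpar)^-1 * Top i f.

Definition omega (f : F) : F := prodop [seq sop k | k <- rev (iota 1 n.-1)] (tau 1 f).

Definition Yop (i : nat) (f : F) : F :=
  cst tpar ^ (Posz i - Posz n) *
  prodop ([seq Top k | k <- iota i (n - i)] ++ [:: omega] ++
          [seq Tinv k | k <- iota 1 i.-1]) f.

Definition Tijinv (i j : nat) (f : F) : F :=
  prodop ([seq Tinv k | k <- iota i (j.-1 - i)] ++ [:: Tinv j.-1] ++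
          [seq Tinv k | k <- rev (iota i (j.-1 - i))]) f.

Definition Dop (i : nat) (f : F) : F :=
  (xv i)^-1 * (f - cst tpar ^+ n.-1 *
     (Yop i f + ((cst tpar)^-1 - 1) *
        \sum_(i.+1 <= j < n.+1) cst tpar ^+ (j - i) * Tijinv i j (Yop i f))).

Definition Acoef (i m : nat) : F :=
  \prod_(m <= j < n.+1 | j != i) ((cst tpar * xv i - xv j) / (xv i - xv j)).

Definition is_laurent (f : F) : Prop :=
  exists (p : P) (k : nat), f = p%:F / ((\prod_(j < n) 'X_j : P)%:F) ^+ k.

Definition is_symmetric (f : F) : Prop :=
  forall s : 'S_n, liftF (msym s) f = f.

End Ops.

(* Main.v *)
Require Import Defs.
From HB Require Import structures.
From mathcomp Require Import all_boot all_order all_algebra.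
From mathcomp Require Import fingroup perm generic_quotient fraction.
From mathcomp Require Import mpoly.
From mathcomp Require Import ring zify.
Import GRing.Theory.
Local Open Scope ring_scope.
Set Implicit Arguments.
Unset Strict Implicit.
Unset Printing Implicit Defensive.

Section Frac.
Variable R : idomainType.
Lemma frac_repr (f : {fraction R}) : f = (\n_(repr f))%:F / (\d_(repr f))%:F.
Proof.
have hd : (\d_(repr f))%:F != 0 by rewrite tofrac_eq0 denom_ratioP.
apply: (mulIf hd); rewrite mulfVK //.
rewrite -[f in LHS]reprK; set x := repr f.
rewrite !piE.
apply/eqmodP; rewrite /= FracField.equivfE /=.
rewrite !numden_Ratio ?(oner_eq0, mulf_neq0, denom_ratioP) //.
by rewrite !mulr1 /x reprK mulrC.
Qed.
 
Lemma tofrac_inj (p q : R) : p%:F = q%:F -> p = q.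
Proof. by move/eqP; rewrite tofrac_eq => /eqP. Qed.
End Frac.

Section GenField.
Variable K : fieldType.
Lemma divB_gen (a b c d : K) : b != 0 -> d != 0 ->
  a / b - c / d = (a * d - c * b) / (b * d).
Proof. by move=> hb hd; field; apply/andP. Qed.
Lemma divM_gen (a b c d : K) : b != 0 -> d != 0 ->
  a / b * (c / d) = (a * c) / (b * d).
Proof. by move=> hb hd; field; apply/andP. Qed.
End GenField.

Section Lift.
Variable n : nat.
Local Notation F := (Fx n).
Local Notation P := {mpoly Kqt[n]}.

Section L1.
Variable phi : {rmorphism P -> P}.
Hypothesis phi_inj : injective phi.

Lemma phi_neq0 p : p != 0 -> phi p != 0.
Proof.
apply: contra => /eqP h; apply/eqP; apply: phi_inj; by rewrite h rmorph0.
Qed.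

Lemma liftF_frac a b : b != 0 -> liftF phi (a%:F / b%:F) = (phi a)%:F / (phi b)%:F.
Proof.
move=> hb; rewrite /liftF.
set f := a%:F / b%:F.
have := frac_repr f.
case: (repr f) => [[N D] /= hD].
rewrite {1}/f => /eqP.
have hb' : b%:F != 0 by rewrite tofrac_eq0.
have hD' : D%:F != 0 by rewrite tofrac_eq0.
rewrite (@eqr_div _ _ _ _ _ hb' hD') -!tofracM tofrac_eq => /eqP e.
have hb'' : (phi b)%:F != 0 by rewrite tofrac_eq0; apply: phi_neq0.
have hD'' : (phi D)%:F != 0 by rewrite tofrac_eq0; apply: phi_neq0.
apply/eqP; rewrite (@eqr_div _ _ _ _ _ hD'' hb'') -!tofracM -!rmorphM.
by rewrite e mulrC.
Qed.

Lemma liftF_tofrac a : liftF phi a%:F = (phi a)%:F.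
Proof.
by rewrite -[a%:F]divr1 -tofrac1 liftF_frac ?oner_eq0 // rmorph1 tofrac1 divr1.
Qed.

Definition lF (h : injective phi) := liftF phi.

Lemma lF_is_zmod : zmod_morphism (lF phi_inj).
Proof.
move=> x y; rewrite [x]frac_repr [y]frac_repr.
case: (repr x) => [[a b] /= hb].
case: (repr y) => [[c d] /= hd].
have hb' : b%:F != 0 by rewrite tofrac_eq0.
have hd' : d%:F != 0 by rewrite tofrac_eq0.
have hpb : (phi b)%:F != 0 by rewrite tofrac_eq0; apply: phi_neq0.
have hpd : (phi d)%:F != 0 by rewrite tofrac_eq0; apply: phi_neq0.
rewrite (divB_gen _ _ hb' hd') -!tofracM -tofracB.
rewrite /lF !liftF_frac ?mulf_neq0 // (divB_gen _ _ hpb hpd).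
by rewrite -!tofracM -tofracB !rmorphB !rmorphM.
Qed.

Lemma lF_is_monoid : monoid_morphism (lF phi_inj).
Proof.
split; first by rewrite /lF -tofrac1 liftF_tofrac rmorph1.
move=> x y; rewrite [x]frac_repr [y]frac_repr.
case: (repr x) => [[a b] /= hb].
case: (repr y) => [[c d] /= hd].
have hb' : b%:F != 0 by rewrite tofrac_eq0.
have hd' : d%:F != 0 by rewrite tofrac_eq0.
have hpb : (phi b)%:F != 0 by rewrite tofrac_eq0; apply: phi_neq0.
have hpd : (phi d)%:F != 0 by rewrite tofrac_eq0; apply: phi_neq0.
rewrite (divM_gen _ _ hb' hd') -!tofracM.
rewrite /lF !liftF_frac ?mulf_neq0 // (divM_gen _ _ hpb hpd).
by rewrite -!tofracM !rmorphM.
Qed.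

HB.instance Definition _ := GRing.isZmodMorphism.Build F F (lF phi_inj) lF_is_zmod.
HB.instance Definition _ := GRing.isMonoidMorphism.Build F F (lF phi_inj) lF_is_monoid.

End L1.

Lemma liftF_comp (phi1 psi1 phi2 psi2 : {rmorphism P -> P}) :
  injective phi1 -> injective psi1 -> injective phi2 -> injective psi2 ->
  (forall p, psi1 (phi1 p) = psi2 (phi2 p)) ->
  forall f, liftF psi1 (liftF phi1 f) = liftF psi2 (liftF phi2 f).
Proof.
move=> i1 j1 i2 j2 e f; rewrite [f]frac_repr.
case: (repr f) => [[a b] /= hb].
rewrite !liftF_frac ?phi_neq0 //.
by rewrite !e.
Qed.

Lemma liftF_inv (phi psi : {rmorphism P -> P}) :
  injective phi -> injective psi -> (forall p, psi (phi p) = p) ->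
  forall f, liftF psi (liftF phi f) = f.
Proof.
move=> i1 j1 e f; rewrite [f]frac_repr.
case: (repr f) => [[a b] /= hb].
by rewrite !liftF_frac ?phi_neq0 // !e.
Qed.

Lemma liftF_ext (phi1 phi2 : P -> P) : (forall p, phi1 p = phi2 p) ->
  forall f, liftF phi1 f = liftF phi2 f.
Proof. by move=> e f; rewrite /liftF !e. Qed.

End Lift.

Definition sw (k j : nat) : nat := if j == k then k.+1 else if j == k.+1 then k else j.

Ltac swt := rewrite /sw; repeat (match goal with
  | |- context [?a == ?b] =>
      lazymatch a with context [if _ then _ else _] => fail | _ =>
      lazymatch b with context [if _ then _ else _] => fail | _ =>
      case: (@eqP _ a b) => ?; try subst end end end); try lia.
Lemma sw_inv k i : sw k (sw k i) = i.
Proof. swt. Qed.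
Lemma sw_comm k l i : (k.+1 < l)%N -> sw k (sw l i) = sw l (sw k i).
Proof. move=> h; swt. Qed.
Lemma sw_pos k i : (0 < k)%N -> (0 < i)%N -> (0 < sw k i)%N.
Proof. move=> h1 h2; swt. Qed.
Lemma sw_eqS k i : (sw k i == k.+1) = (i == k).
Proof. swt. Qed.
Lemma sw_eqo k l i : l != k -> l != k.+1 -> (sw k i == l) = (i == l).
Proof. move=> /eqP h1 /eqP h2; swt. Qed.

Section Abs.
Variable K : fieldType.
Variables (N : nat) (s tau : nat -> K -> K) (x : nat -> K) (u : K).

Definition aprodop (l : seq (K -> K)) (g : K) : K := foldr (fun o h => o h) g l.
Definition aTop (i : nat) (f : K) : K :=
  u * f + (u * x i - x i.+1) / (x i - x i.+1) * (s i f - f).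
Definition aTinv (i : nat) (f : K) : K := u^-1 * f - f + u^-1 * aTop i f.
Definition aomega (f : K) : K := aprodop [seq s k | k <- rev (iota 1 N.-1)] (tau 1 f).
Definition aYop (i : nat) (f : K) : K :=
  u ^ (Posz i - Posz N) *
  aprodop ([seq aTop k | k <- iota i (N - i)] ++ [:: aomega] ++
          [seq aTinv k | k <- iota 1 i.-1]) f.
Definition aTijinv (i j : nat) (f : K) : K :=
  aprodop ([seq aTinv k | k <- iota i (j.-1 - i)] ++ [:: aTinv j.-1] ++
          [seq aTinv k | k <- rev (iota i (j.-1 - i))]) f.
Definition aDop (i : nat) (f : K) : K :=
  (x i)^-1 * (f - u ^+ N.-1 *
     (aYop i f + (u^-1 - 1) *
        \sum_(i.+1 <= j < N.+1) u ^+ (j - i) * aTijinv i j (aYop i f))).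
Definition aAcoef (i m : nat) : K :=
  \prod_(m <= j < N.+1 | j != i) ((u * x i - x j) / (x i - x j)).

Hypothesis Hs : forall k, (0 < k < N)%N ->
  exists phi : {rmorphism K -> K}, forall a, s k a = phi a.
Hypothesis Hss : forall k a, (0 < k < N)%N -> s k (s k a) = a.
Hypothesis Hsc : forall k l a, (0 < k)%N -> (k.+1 < l)%N -> (l < N)%N ->
  s k (s l a) = s l (s k a).
Hypothesis Hst : forall k a, (0 < k < N)%N -> s k (tau k a) = tau k.+1 (s k a).
Hypothesis Hst' : forall k l a, (0 < k < N)%N -> (0 < l <= N)%N -> l != k -> l != k.+1 ->
  s k (tau l a) = tau l (s k a).
Hypothesis Hsx : forall k j, (0 < k < N)%N -> (0 < j)%N -> s k (x j) = x (sw k j).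
Hypothesis Hsu : forall k, (0 < k < N)%N -> s k u = u.
Hypothesis Ht : exists phi : {rmorphism K -> K}, forall a, tau 1 a = phi a.
Hypothesis Htu : tau 1 u = u.
Hypothesis Hx : forall i j, (0 < i <= N)%N -> (0 < j <= N)%N -> i != j -> x i - x j != 0.
Hypothesis Hx0 : forall i, (0 < i <= N)%N -> x i != 0.
Hypothesis Hu : u != 0.

Section SLem.
Variable k : nat.
Hypothesis hk : (0 < k < N)%N.
Lemma sD a b : s k (a + b) = s k a + s k b.
Proof. by have [phi e] := Hs hk; rewrite !e rmorphD. Qed.
Lemma sB a b : s k (a - b) = s k a - s k b.
Proof. by have [phi e] := Hs hk; rewrite !e rmorphB. Qed.
Lemma sM a b : s k (a * b) = s k a * s k b.
Proof. by have [phi e] := Hs hk; rewrite !e rmorphM. Qed.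
Lemma sV a : s k (a^-1) = (s k a)^-1.
Proof. by have [phi e] := Hs hk; rewrite !e fmorphV. Qed.
Lemma sXn a m : s k (a ^+ m) = (s k a) ^+ m.
Proof. by have [phi e] := Hs hk; rewrite !e rmorphXn. Qed.
Lemma s1 : s k 1 = 1.
Proof. by have [phi e] := Hs hk; rewrite !e rmorph1. Qed.
Lemma s_sum (a b : nat) (P : pred nat) (F : nat -> K) :
  s k (\sum_(a <= i < b | P i) F i) = \sum_(a <= i < b | P i) s k (F i).
Proof.
have [phi e] := Hs hk; rewrite !e rmorph_sum; apply: eq_bigr => i _; by rewrite e.
Qed.
Lemma s_prod (a b : nat) (P : pred nat) (F : nat -> K) :
  s k (\prod_(a <= i < b | P i) F i) = \prod_(a <= i < b | P i) s k (F i).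
Proof.
have [phi e] := Hs hk; rewrite !e rmorph_prod; apply: eq_bigr => i _; by rewrite e.
Qed.
Lemma s_uinv m : s k ((u^-1) ^+ m) = (u^-1) ^+ m.
Proof. by rewrite sXn sV Hsu. Qed.
Lemma s_scal c h : s k c = c -> s k (c * h) = c * s k h.
Proof. by move=> e; rewrite sM e. Qed.
End SLem.

Lemma t_uinv m : tau 1 ((u^-1) ^+ m) = (u^-1) ^+ m.
Proof. by have [phi e] := Ht; rewrite !e rmorphXn fmorphV -e Htu. Qed.
Lemma t_scal c h : tau 1 c = c -> tau 1 (c * h) = c * tau 1 h.
Proof. by have [phi e] := Ht; rewrite !e rmorphM -!e => ->. Qed.

Lemma aprodop_cat l1 l2 g : aprodop (l1 ++ l2) g = aprodop l1 (aprodop l2 g).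
Proof. by rewrite /aprodop foldr_cat. Qed.

Lemma aprodop_cons o l g : aprodop (o :: l) g = o (aprodop l g).
Proof. by []. Qed.

Lemma aprodop_map_cons (g : nat -> K -> K) k l y :
  aprodop [seq g i | i <- k :: l] y = g k (aprodop [seq g i | i <- l] y).
Proof. by []. Qed.

Lemma aprodop_scal (g : nat -> K -> K) (l : seq nat) c :
  (forall k, k \in l -> forall h, g k (c * h) = c * g k h) ->
  forall h, aprodop [seq g k | k <- l] (c * h) = c * aprodop [seq g k | k <- l] h.
Proof.
elim: l => [|k l IH] H h //.
rewrite !aprodop_map_cons IH; last by move=> k' hk'; apply: H; rewrite inE hk' orbT.
by apply: H; rewrite inE eqxx.
Qed.

Lemma iota_rcons i d : iota i d.+1 = rcons (iota i d) (i + d).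
Proof. by rewrite -cats1 -(addn1 d) iotaD. Qed.

Lemma Top_fix k h : s k h = h -> aTop k h = u * h.
Proof. by move=> e; rewrite /aTop e subrr mulr0 addr0. Qed.
Lemma Tinv_fix k h : s k h = h -> aTinv k h = u^-1 * h.
Proof. by move=> e; rewrite /aTinv Top_fix // mulrA mulVf // mul1r subrK. Qed.

Lemma Top_scal k c h : (0 < k < N)%N -> s k c = c -> aTop k (c * h) = c * aTop k h.
Proof. by move=> hk e; rewrite /aTop s_scal //; ring. Qed.
Lemma Tinv_scal k c h : (0 < k < N)%N -> s k c = c -> aTinv k (c * h) = c * aTinv k h.
Proof. by move=> hk e; rewrite /aTinv Top_scal //; ring. Qed.

Lemma swl k : sw k k = k.+1. Proof. by rewrite /sw eqxx. Qed.
Lemma swr k : sw k k.+1 = k.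
Proof. by rewrite /sw (gtn_eqF (ltnSn k)) eqxx. Qed.
Lemma swo k j : j != k -> j != k.+1 -> sw k j = j.
Proof. by rewrite /sw => /negPf -> /negPf ->. Qed.

Lemma TinvTop k h : (0 < k < N)%N -> aTinv k (aTop k h) = h.
Proof.
move=> hk.
have hkN : (0 < k <= N)%N by case/andP: hk => -> /ltnW.
have hk1N : (0 < k.+1 <= N)%N by case/andP: hk.
have hne : x k - x k.+1 != 0 by apply: Hx => //; rewrite (ltn_eqF (ltnSn k)).
have hne' : x k.+1 - x k != 0 by rewrite -opprB oppr_eq0.
have e : s k (aTop k h) = u * s k h +
   (u * x k.+1 - x k) / (x k.+1 - x k) * (h - s k h).
  have h0k : (0 < k)%N by lia.
  by rewrite /aTop sD // !sM // sV // !sB // sM // Hsu // !Hsx // swl swr Hss.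
have e2 : aTop k (aTop k h) = u * aTop k h + (u * x k - x k.+1) / (x k - x k.+1) *
   (s k (aTop k h) - aTop k h) by [].
rewrite /aTinv e2 e /aTop.
by field; rewrite hne hne' Hu.
Qed.

Hypothesis hN : (0 < N)%N.

Lemma sTop_comm k j h : (0 < k)%N -> (k.+1 < j)%N -> (j < N)%N ->
  s k (aTop j h) = aTop j (s k h).
Proof.
move=> h0 h1 h2.
have hk : (0 < k < N)%N by apply/andP; split => //; lia.
have h0j : (0 < j)%N by lia.
rewrite /aTop sD // !sM // sV // !sB // sM // Hsu // !Hsx //.
rewrite (Hsc _ h0 h1 h2) !swo //; apply/eqP; lia.
Qed.

Section Sym.
Variable f : K.
Hypothesis Hf : forall k, (0 < k < N)%N -> s k f = f.

Lemma Tinvs_f l : all (fun k => (0 < k < N)%N) l ->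
  aprodop [seq aTinv k | k <- l] f = (u^-1)^+(size l) * f.
Proof.
elim: l => [|k l IH]; first by rewrite /= expr0 mul1r.
case/andP => hk hl; rewrite aprodop_map_cons IH // Tinv_scal ?s_uinv //.
by rewrite Tinv_fix ?Hf // exprS; ring.
Qed.

Lemma omega_pre j : (j < N)%N ->
  aprodop [seq s k | k <- rev (iota 1 j)] (tau 1 f) = tau j.+1 f.
Proof.
elim: j => [|j IH] hj //.
rewrite iota_rcons rev_rcons aprodop_map_cons IH; last by lia.
by rewrite Hst ?Hf //; apply/andP; split.
Qed.

Lemma omega_f c : tau 1 c = c -> (forall k, (0 < k < N)%N -> s k c = c) ->
  aomega (c * f) = c * tau N f.
Proof.
move=> hc hs; rewrite /aomega t_scal // aprodop_scal.
  by rewrite omega_pre ?prednK //; lia.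
move=> k; rewrite mem_rev mem_iota => hk h; rewrite s_scal ?hs //; apply/andP; split; lia.
Qed.

Definition G j := aprodop [seq aTop k | k <- iota j (N - j)] (tau N f).

Lemma G_N : G N = tau N f.
Proof. by rewrite /G subnn. Qed.

Lemma G_rec j : (j < N)%N -> G j = aTop j (G j.+1).
Proof. by move=> hj; rewrite /G -(subnSK hj). Qed.

Lemma G_fix k j : (0 < k)%N -> (k.+1 < j)%N -> (j <= N)%N -> s k (G j) = G j.
Proof.
move=> hk; move: {2}(N - j)%N (erefl (N - j)%N) => d; elim: d j => [|d IH] j hd h1 h2.
  have -> : (j = N)%N by lia.
  rewrite G_N Hst' ?Hf //; try (apply/andP; split); try lia; apply/eqP; lia.
have hj : (j < N)%N by lia.
by rewrite G_rec // sTop_comm // IH //; lia.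
Qed.

Lemma Tinvs_rev i d : (0 < i)%N -> (i + d <= N)%N ->
  aprodop [seq aTinv k | k <- rev (iota i d)] (G i) = G (i + d).
Proof.
move=> hi; elim: d => [|d IH] hd; first by rewrite addn0.
rewrite iota_rcons rev_rcons aprodop_map_cons IH; last by lia.
rewrite G_rec; last by lia.
by rewrite TinvTop ?addnS ?addn0 //; apply/andP; split; lia.
Qed.

Lemma Tinvs_fixG j l : all (fun k => (0 < k)%N && (k.+1 < j)%N) l -> (j <= N)%N ->
  aprodop [seq aTinv k | k <- l] (G j) = (u^-1)^+(size l) * G j.
Proof.
move=> + hj; elim: l => [|k l IH]; first by rewrite /= expr0 mul1r.
case/andP => /andP [hk0 hk1] hl.
have hk : (0 < k < N)%N by apply/andP; split; lia.
rewrite aprodop_map_cons IH // Tinv_scal ?s_uinv //.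
by rewrite Tinv_fix ?G_fix // exprS; ring.
Qed.

Lemma Tij_G i j c : (0 < i)%N -> (i < j)%N -> (j <= N)%N ->
  (forall k, (0 < k < N)%N -> s k c = c) ->
  aTijinv i j (c * G i) = c * ((u^-1)^+(j.-1 - i) * G j).
Proof.
move=> hi hij hj hc.
have sc : forall k, k \in iota i (j.-1 - i) -> forall h, aTinv k (c * h) = c * aTinv k h.
  move=> k; rewrite mem_iota => hk h; apply: Tinv_scal; last by apply: hc; apply/andP; split; lia.
  by apply/andP; split; lia.
rewrite /aTijinv !aprodop_cat aprodop_scal; last first.
  by move=> k; rewrite mem_rev; apply: sc.
rewrite [aprodop [:: _] _]/= Tinv_scal; first last.
- by apply: hc; apply/andP; split; lia.
- by apply/andP; split; lia.
rewrite aprodop_scal //; congr (_ * _).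
rewrite Tinvs_rev //; last by lia.
have -> : (i + (j.-1 - i) = j.-1)%N by lia.
rewrite (G_rec (j := j.-1)); last by lia.
rewrite prednK; last by lia.
rewrite TinvTop; last by apply/andP; split; lia.
rewrite Tinvs_fixG ?size_iota //.
apply/allP => k; rewrite mem_iota => hk; apply/andP; split; lia.
Qed.

Lemma Dop_f i : (0 < i <= N)%N ->
  aDop i f = (x i)^-1 * (f - (G i + (1 - u) * \sum_(i.+1 <= j < N.+1) G j)).
Proof.
move=> /andP [hi0 hiN].
set C := (u^-1)^+(i.-1).
have sC : forall k, (0 < k < N)%N -> s k C = C by move=> k hk; rewrite s_uinv.
have hY : aYop i f = u ^ (Posz i - Posz N) * (C * G i).
  rewrite /aYop !aprodop_cat Tinvs_f; last first.
    by apply/allP => k; rewrite mem_iota => hk; apply/andP; split; lia.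
  rewrite size_iota [aprodop [:: _] _]/= omega_f ?t_uinv //.
  rewrite aprodop_scal // => k; rewrite mem_iota => hk h.
  by apply: Top_scal; [apply/andP; split; lia | apply: sC; apply/andP; split; lia].
have hU : u ^ (Posz i - Posz N) = u ^+ i / u ^+ N.
  by rewrite expfzDr // -exprnN.
set C' := u ^+ i / u ^+ N * C.
have sC' : forall k, (0 < k < N)%N -> s k C' = C'.
  by move=> k hk; rewrite /C' !sM // sC // sV // !sXn // Hsu.
have hu1 : forall k, u ^+ k != 0 by move=> k; rewrite expf_neq0.
rewrite /aDop hY hU mulrA -/C'.
have -> : \sum_(i.+1 <= j < N.+1) u ^+ (j - i) * aTijinv i j (C' * G i) =
          C' * u * \sum_(i.+1 <= j < N.+1) G j.
  rewrite mulr_sumr; apply: eq_big_nat => j hj.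
  rewrite Tij_G //; try lia.
  have -> : (j - i = (j.-1 - i).+1)%N by lia.
  rewrite exprS exprVn.
  by field; rewrite hu1.
have hC : u ^+ N.-1 * C' = 1.
  rewrite /C' /C.
  have -> : (i = (i.-1).+1)%N by lia.
  have -> : (N = (N.-1).+1)%N by lia.
  rewrite /= !exprS exprVn.
  by field; rewrite !hu1 Hu.
congr (_ * (_ - _)).
set S := \sum_(_ <= _ < _) _.
have -> : u ^+ N.-1 * (C' * G i + (u^-1 - 1) * (C' * u * S)) =
          (u ^+ N.-1 * C') * (G i + (u^-1 - 1) * u * S) by ring.
rewrite hC mul1r mulrBl mulVf // mul1r.
done.
Qed.

End Sym.

Definition Wc m (h : nat -> K) : K :=
  aAcoef m m * h m +
  (u - 1) * \sum_(m.+1 <= i < N.+1) (x m / (x i - x m) * aAcoef i m.+1 * h i).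

Lemma prod_drop (a b c : nat) (F : nat -> K) : (c < a)%N ->
  \prod_(a <= j < b | j != c) F j = \prod_(a <= j < b) F j.
Proof.
move=> hc; rewrite big_nat_cond [RHS]big_nat_cond; apply: eq_bigl => j.
rewrite andbT; case: (boolP (a <= j < b)%N) => //= /andP [h1 h2].
by apply/eqP => e; move: h1; rewrite e; lia.
Qed.

Lemma Acoef_split i m : (m < i)%N -> (i <= N)%N ->
  aAcoef i m = (u * x i - x m) / (x i - x m) * aAcoef i m.+1.
Proof.
move=> h1 h2; rewrite /aAcoef big_ltn_cond; last by lia.
by have -> : (m != i) = true by apply/eqP; lia.
Qed.

Lemma AcoefNN : aAcoef N N = 1.
Proof.
rewrite /aAcoef big_ltn_cond // eqxx big_geq //.
Qed.

Lemma Wc_N h : Wc N h = h N.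
Proof. by rewrite /Wc AcoefNN mul1r big_geq // mulr0 addr0. Qed.

Lemma Wc_local m h : (0 < m < N)%N ->
  s m (h m.+1) = h m -> (forall i, (m.+2 <= i <= N)%N -> s m (h i) = h i) ->
  aTop m (Wc m.+1 h) + (1 - u) * Wc m.+1 h = Wc m h.
Proof.
move=> hm hh1 hh2.
have hm0 : (0 < m <= N)%N by apply/andP; split; lia.
have hm1 : (0 < m.+1 <= N)%N by apply/andP; split; lia.
have hxx : x m - x m.+1 != 0 by apply: Hx => //; apply/eqP; lia.
set a := (u * x m - x m.+1) / (x m - x m.+1).
set B := \prod_(m.+2 <= j < N.+1) ((u * x m - x j) / (x m - x j)).
have eA1 : aAcoef m.+1 m.+1 = \prod_(m.+2 <= j < N.+1) ((u * x m.+1 - x j) / (x m.+1 - x j)).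
  by rewrite /aAcoef big_ltn_cond ?eqxx ?prod_drop //; lia.
have eAm : aAcoef m m = a * B.
  rewrite /aAcoef big_ltn_cond ?eqxx; last by lia.
  rewrite big_ltn_cond; last by lia.
  have -> : (m.+1 != m) = true by apply/eqP; lia.
  by rewrite prod_drop.
have sA1 : s m (aAcoef m.+1 m.+1) = B.
  rewrite eA1 s_prod //; apply: eq_big_nat => j hj.
  have h0j : (0 < j)%N by lia.
  rewrite sM // sV // !sB // sM // Hsu // !Hsx // swr swo //; apply/eqP; lia.
have sA2 : forall i, (m.+2 <= i <= N)%N -> s m (aAcoef i m.+2) = aAcoef i m.+2.
  move=> i hi; rewrite /aAcoef s_prod // big_nat_cond [RHS]big_nat_cond.
  apply: eq_bigr => j /andP [/andP [h1 h2] h3].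
  have h0j : (0 < j)%N by lia.
  have h0i : (0 < i)%N by lia.
  rewrite sM // sV // !sB // sM // Hsu // !Hsx // !swo //; apply/eqP; lia.
set X := Wc m.+1 h.
set S1 := \sum_(m.+2 <= i < N.+1) (x m.+1 / (x i - x m.+1) * aAcoef i m.+2 * h i).
set S2 := \sum_(m.+2 <= i < N.+1) (x m / (x i - x m) * aAcoef i m.+2 * h i).
have eX : X = aAcoef m.+1 m.+1 * h m.+1 + (u - 1) * S1 by [].
have sX : s m X = B * h m + (u - 1) * S2.
  rewrite eX sD // !sM // sA1 hh1 sB // Hsu // s1 // s_sum //; congr (_ + _ * _).
  apply: eq_big_nat => i hi.
  have h0i : (0 < i)%N by lia.
  rewrite !sM // sV // sB // !Hsx // swr swo ?sA2 ?hh2 //; try (apply/eqP; lia).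
  all: try (apply/andP; split; lia). all: try lia.
have eW : Wc m h = a * B * h m + (u - 1) * (x m / (x m.+1 - x m) * aAcoef m.+1 m.+1 * h m.+1
   + ((1 - a) * S1 + a * S2)).
  rewrite /Wc eAm big_ltn; last by lia.
  congr (_ + _ * (_ + _)).
  rewrite /S1 /S2 !mulr_sumr -big_split; apply: eq_big_nat => i hi.
  rewrite Acoef_split; try lia.
  have hi1 : x i - x m != 0 by apply: Hx; try (apply/andP; split); try lia; apply/eqP; lia.
  have hi2 : x i - x m.+1 != 0 by apply: Hx; try (apply/andP; split); try lia; apply/eqP; lia.
  rewrite /a /=; by field; rewrite hi1 hi2 hxx.
rewrite eW /aTop -/a sX eX.
have hxx' : x m.+1 - x m != 0 by rewrite -opprB oppr_eq0.
rewrite /a; by field; rewrite hxx hxx'.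
Qed.

Lemma Wc1 m : (0 < m <= N)%N -> Wc m (fun _ => 1) = 1.
Proof.
move=> hm; move: {2}(N - m)%N (erefl (N - m)%N) => d; elim: d m hm => [|d IH] m hm hd.
  have -> : (m = N)%N by lia.
  by rewrite Wc_N.
have hmN : (0 < m < N)%N by apply/andP; split; lia.
have e := Wc_local (h := fun _ => 1) hmN (s1 hmN) (fun i _ => s1 hmN).
rewrite -e IH; first by rewrite Top_fix ?s1 //; ring.
  by apply/andP; split; lia.
by lia.
Qed.

Section Fin.
Variable f : K.
Hypothesis Hf : forall k, (0 < k < N)%N -> s k f = f.

Lemma W_G m : (0 < m <= N)%N ->
  G f m + (1 - u) * \sum_(m.+1 <= j < N.+1) G f j = Wc m (fun i => tau i f).
Proof.
move=> hm; move: {2}(N - m)%N (erefl (N - m)%N) => d; elim: d m hm => [|d IH] m hm hd.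
  have -> : (m = N)%N by lia.
  by rewrite G_N Wc_N big_geq // mulr0 addr0.
have hmN : (0 < m < N)%N by apply/andP; split; lia.
have g1 : s m (tau m.+1 f) = tau m f.
  have := Hst f hmN; rewrite Hf // => e.
  by rewrite -e Hss.
have g2 : forall i, (m.+2 <= i <= N)%N -> s m (tau i f) = tau i f.
  move=> i hi; rewrite Hst' ?Hf //; try (apply/andP; split; lia); apply/eqP; lia.
rewrite -(Wc_local hmN g1 g2) -IH; first last.
- by lia.
- by apply/andP; split; lia.
rewrite big_ltn; last by lia.
rewrite [G f m]G_rec; last by lia.
set S := \sum_(_ <= _ < _) _.
have sS : s m S = S.
  rewrite /S s_sum //; apply: eq_big_nat => j hj; apply: (G_fix Hf); lia.
rewrite /aTop sD // sM // sB // s1 // Hsu // sS.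
ring.
Qed.

Theorem abs_main m : (0 < m <= N.+1)%N ->
  \sum_(m <= i < N.+1) aDop i f =
  \sum_(m <= i < N.+1) aAcoef i m * (x i)^-1 * (f - tau i f).
Proof.
move=> hm; move: {2}(N.+1 - m)%N (erefl (N.+1 - m)%N) => d; elim: d m hm => [|d IH] m hm hd.
  by rewrite !big_geq //; lia.
have hmN : (0 < m <= N)%N by apply/andP; split; lia.
rewrite big_ltn; last by lia.
rewrite [RHS]big_ltn; last by lia.
rewrite IH; first last.
- by lia.
- by apply/andP; split; lia.
rewrite Dop_f // W_G //.
have hxm : x m != 0 by apply: Hx0.
have ef : f - Wc m (fun i => tau i f) = f * Wc m (fun _ => 1) - Wc m (fun i => tau i f).
  by rewrite Wc1 // mulr1.
rewrite ef /Wc /=.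
set Sa := \sum_(m.+1 <= i < N.+1) (x m / (x i - x m) * aAcoef i m.+1 * 1).
set Sb := \sum_(m.+1 <= i < N.+1) (x m / (x i - x m) * aAcoef i m.+1 * tau i f).
set R := \sum_(m.+1 <= i < N.+1) aAcoef i m.+1 * (x i)^-1 * (f - tau i f).
have eS : \sum_(m.+1 <= i < N.+1) aAcoef i m * (x i)^-1 * (f - tau i f) =
   (x m)^-1 * (u - 1) * (f * Sa - Sb) + R.
  rewrite /Sa /Sb /R mulr_sumr -sumrB mulr_sumr -big_split.
  apply: eq_big_nat => i hi /=.
  rewrite Acoef_split; try lia.
  have hi1 : x i - x m != 0 by apply: Hx; try (apply/andP; split); try lia; apply/eqP; lia.
  have hi0 : x i != 0 by apply: Hx0; apply/andP; split; lia.
  by field; rewrite hi1 hi0 hxm.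
rewrite eS.
ring.
Qed.

End Fin.

End Abs.

Section Conc.
Variable n : nat.
Local Notation F := (Fx n).
Local Notation P := {mpoly Kqt[n]}.

Definition stup (k : nat) : n.-tuple P :=
  [tuple (if j.+1 == k then xp n k.+1 else if j.+1 == k.+1 then xp n k else 'X_j) | j < n].
Definition ttup (k : nat) : n.-tuple P :=
  [tuple (if j.+1 == k then qpar *: 'X_j else 'X_j) | j < n].
Definition titup (k : nat) : n.-tuple P :=
  [tuple (if j.+1 == k then qpar^-1 *: 'X_j else 'X_j) | j < n].

Lemma sop_def k f : @sop n k f = liftF (comp_mpoly (stup k)) f.
Proof. by []. Qed.
Lemma tau_def k f : @tau n k f = liftF (comp_mpoly (ttup k)) f.
Proof. by []. Qed.

Lemma compX (lq : n.-tuple P) (j : 'I_n) : comp_mpoly lq 'X_j = tnth lq j.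
Proof. by rewrite comp_mpolyXU -tnth_nth. Qed.

Lemma comp_comp (lr lq : n.-tuple P) p :
  comp_mpoly lr (comp_mpoly lq p) = comp_mpoly [tuple comp_mpoly lr (tnth lq j) | j < n] p.
Proof.
rewrite (comp_mpolyEX p lq) (comp_mpolyEX p) raddf_sum /=; apply: eq_bigr => m _.
rewrite comp_mpolyZ !comp_mpolyX rmorph_prod; congr (_ *: _); apply: eq_bigr => i _.
by rewrite rmorphXn tnth_mktuple.
Qed.

Lemma comp_ext (A B C D : n.-tuple P) :
  (forall j : 'I_n, comp_mpoly A (tnth B j) = comp_mpoly C (tnth D j)) ->
  forall p, comp_mpoly A (comp_mpoly B p) = comp_mpoly C (comp_mpoly D p).
Proof.
move=> e p.
have E : [tuple comp_mpoly A (tnth B j) | j < n] = [tuple comp_mpoly C (tnth D j) | j < n].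
  apply: eq_from_tnth => j.
  refine (eq_trans (tnth_mktuple (fun j0 => comp_mpoly A (tnth B j0)) j) _).
  refine (eq_trans _ (esym (tnth_mktuple (fun j0 => comp_mpoly C (tnth D j0)) j))).
  exact: e.
refine (eq_trans (comp_comp _ _ _) _).
refine (eq_trans _ (esym (comp_comp _ _ _))).
exact: (congr1 (fun T => comp_mpoly T p) E).
Qed.

Lemma comp_id_ext (A B : n.-tuple P) :
  (forall j : 'I_n, comp_mpoly A (tnth B j) = 'X_j) ->
  forall p, comp_mpoly A (comp_mpoly B p) = p.
Proof.
move=> e p.
have E : [tuple comp_mpoly A (tnth B j) | j < n] = [tuple 'X_j | j < n].
  apply: eq_from_tnth => j.
  refine (eq_trans (tnth_mktuple (fun j0 => comp_mpoly A (tnth B j0)) j) _).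
  refine (eq_trans _ (esym (tnth_mktuple (fun j0 => 'X_j0) j))).
  exact: e.
refine (eq_trans (comp_comp _ _ _) _).
refine (eq_trans (congr1 (fun T => comp_mpoly T p) E) _).
exact: comp_mpoly_id.
Qed.

Lemma xpX (j : 'I_n) : xp n j.+1 = 'X_j.
Proof.
rewrite /xp /=; case: insubP => [j' _ hj'|]; last by rewrite ltn_ord.
have -> : j' = j by apply: val_inj; rewrite hj'.
by [].
Qed.

Lemma xp_big i : (n < i)%N -> xp n i = 0.
Proof.
move=> hi; rewrite /xp; case: insubP => [j' hj' _|//].
by exfalso; move: hj'; lia.
Qed.

Lemma xp_in i : (0 < i <= n)%N -> exists j : 'I_n, i = j.+1.
Proof.
move=> /andP [h1 h2]; have hj : (i.-1 < n)%N by lia.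
by exists (Ordinal hj) => /=; lia.
Qed.

Lemma stup_nth k (j : 'I_n) : tnth (stup k) j = xp n (sw k j.+1).
Proof.
refine (eq_trans (tnth_mktuple _ j) _).
rewrite /sw; case: (j.+1 == k) => //; case: (j.+1 == k.+1) => //.
by rewrite xpX.
Qed.

Lemma ttup_nth k (j : 'I_n) :
  tnth (ttup k) j = if j.+1 == k then qpar *: xp n j.+1 else xp n j.+1.
Proof. refine (eq_trans (tnth_mktuple _ j) _); by rewrite xpX. Qed.

Lemma titup_nth k (j : 'I_n) :
  tnth (titup k) j = if j.+1 == k then qpar^-1 *: xp n j.+1 else xp n j.+1.
Proof. refine (eq_trans (tnth_mktuple _ j) _); by rewrite xpX. Qed.

Lemma sp_xp k i : (0 < k < n)%N -> (0 < i)%N ->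
  comp_mpoly (stup k) (xp n i) = xp n (sw k i).
Proof.
move=> hk hi; case: (leqP i n) => hin.
  have [j ->] : exists j : 'I_n, i = j.+1 by apply: xp_in; apply/andP.
  by rewrite xpX compX stup_nth.
rewrite xp_big // raddf0 /sw.
have -> : (i == k) = false by apply/eqP; lia.
have -> : (i == k.+1) = false by apply/eqP; lia.
by rewrite xp_big.
Qed.

Lemma tp_xp k i : (0 < i)%N ->
  comp_mpoly (ttup k) (xp n i) = if i == k then qpar *: xp n i else xp n i.
Proof.
move=> hi; case: (leqP i n) => hin.
  have [j ->] : exists j : 'I_n, i = j.+1 by apply: xp_in; apply/andP.
  by rewrite xpX compX ttup_nth xpX.
by rewrite xp_big // raddf0 scaler0; case: ifP.
Qed.

Lemma tip_xp k i : (0 < i)%N ->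
  comp_mpoly (titup k) (xp n i) = if i == k then qpar^-1 *: xp n i else xp n i.
Proof.
move=> hi; case: (leqP i n) => hin.
  have [j ->] : exists j : 'I_n, i = j.+1 by apply: xp_in; apply/andP.
  by rewrite xpX compX titup_nth xpX.
by rewrite xp_big // raddf0 scaler0; case: ifP.
Qed.

Lemma qpar_neq0 : qpar != 0.
Proof.
rewrite /qpar tofrac_eq0; apply/negP => /eqP e.
have := congr1 (mcoeff U_(@Ordinal 2 0 isT)) e.
by rewrite mcoeffXU mcoeff0 eqxx => /eqP; rewrite oner_eq0.
Qed.

Lemma tpar_neq0 : tpar != 0.
Proof.
rewrite /tpar tofrac_eq0; apply/negP => /eqP e.
have := congr1 (mcoeff U_(@Ordinal 2 1 isT)) e.
by rewrite mcoeffXU mcoeff0 eqxx => /eqP; rewrite oner_eq0.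
Qed.

Lemma sp_inv k : (0 < k < n)%N -> forall p,
  comp_mpoly (stup k) (comp_mpoly (stup k) p) = p.
Proof.
move=> hk; apply: comp_id_ext => j.
by rewrite stup_nth sp_xp // ?sw_inv ?xpX // sw_pos //; lia.
Qed.

Lemma tp_inv k : (0 < k)%N -> forall p,
  comp_mpoly (titup k) (comp_mpoly (ttup k) p) = p.
Proof.
move=> hk; apply: comp_id_ext => j.
rewrite ttup_nth; case: ifP => e.
  by rewrite comp_mpolyZ tip_xp // e scalerA mulfV ?qpar_neq0 // scale1r xpX.
by rewrite tip_xp // e xpX.
Qed.

Definition spR k : {rmorphism P -> P} := GRing.RMorphism.clone _ _ (comp_mpoly (stup k)) _.
Definition tpR k : {rmorphism P -> P} := GRing.RMorphism.clone _ _ (comp_mpoly (ttup k)) _.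

Lemma sp_inj k : (0 < k < n)%N -> injective (spR k).
Proof. by move=> hk; apply: (can_inj (sp_inv hk)). Qed.
Lemma tp_inj k : (0 < k)%N -> injective (tpR k).
Proof. by move=> hk; apply: (can_inj (tp_inv hk)). Qed.

Lemma cHs k : (0 < k < n)%N ->
  exists phi : {rmorphism F -> F}, forall a, @sop n k a = phi a.
Proof.
move=> hk; exists (GRing.RMorphism.clone _ _ (lF (sp_inj hk)) _) => a.
by [].
Qed.

Lemma cHt : (0 < n)%N ->
  exists phi : {rmorphism F -> F}, forall a, @tau n 1 a = phi a.
Proof.
move=> hn; exists (GRing.RMorphism.clone _ _ (lF (tp_inj (ltn0Sn 0))) _) => a.
by [].
Qed.

Lemma cHss k a : (0 < k < n)%N -> @sop n k (@sop n k a) = a.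
Proof.
move=> hk; exact: (liftF_inv (sp_inj hk) (sp_inj hk) (sp_inv hk)).
Qed.

Lemma cHsc k l a : (0 < k)%N -> (k.+1 < l)%N -> (l < n)%N ->
  @sop n k (@sop n l a) = @sop n l (@sop n k a).
Proof.
move=> h1 h2 h3.
have hk : (0 < k < n)%N by apply/andP; split; lia.
have hl : (0 < l < n)%N by apply/andP; split; lia.
apply: (liftF_comp (sp_inj hl) (sp_inj hk) (sp_inj hk) (sp_inj hl)).
apply: comp_ext => j.
rewrite !stup_nth.
rewrite (sp_xp hk); last by apply: sw_pos; lia.
rewrite (sp_xp hl); last by apply: sw_pos; lia.
by rewrite sw_comm.
Qed.

Lemma cHst k a : (0 < k < n)%N -> @sop n k (@tau n k a) = @tau n k.+1 (@sop n k a).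
Proof.
move=> hk.
have h0 : (0 < k)%N by lia.
apply: (liftF_comp (tp_inj h0) (sp_inj hk) (sp_inj hk) (tp_inj (ltn0Sn k))).
apply: comp_ext => j.
rewrite ttup_nth stup_nth.
have hs : (0 < sw k j.+1)%N by apply: sw_pos.
rewrite (tp_xp _ hs) sw_eqS.
case: ifP => _; last by rewrite (sp_xp hk).
by rewrite comp_mpolyZ (sp_xp hk).
Qed.

Lemma cHst' k l a : (0 < k < n)%N -> (0 < l <= n)%N -> l != k -> l != k.+1 ->
  @sop n k (@tau n l a) = @tau n l (@sop n k a).
Proof.
move=> hk hl e1 e2.
have h0 : (0 < l)%N by lia.
apply: (liftF_comp (tp_inj h0) (sp_inj hk) (sp_inj hk) (tp_inj h0)).
apply: comp_ext => j.
rewrite ttup_nth stup_nth.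
have hs : (0 < sw k j.+1)%N by apply: sw_pos; lia.
rewrite (tp_xp _ hs) (sw_eqo _ e1 e2).
case: ifP => _; last by rewrite (sp_xp hk).
by rewrite comp_mpolyZ (sp_xp hk).
Qed.

Lemma cHsx k j : (0 < k < n)%N -> (0 < j)%N -> @sop n k (xv n j) = xv n (sw k j).
Proof.
move=> hk hj; rewrite /xv.
refine (eq_trans (liftF_tofrac (sp_inj hk) _) _).
by rewrite /= (sp_xp hk).
Qed.

Lemma cHsu k : (0 < k < n)%N -> @sop n k (cst n tpar) = cst n tpar.
Proof.
move=> hk; rewrite /cst.
refine (eq_trans (liftF_tofrac (sp_inj hk) _) _).
by rewrite /= comp_mpolyC.
Qed.

Lemma cHtu : @tau n 1 (cst n tpar) = cst n tpar.
Proof.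
rewrite /cst.
refine (eq_trans (liftF_tofrac (tp_inj (ltn0Sn 0)) _) _).
by rewrite /= comp_mpolyC.
Qed.

Lemma X_neq (a b : 'I_n) : a != b -> ('X_a - 'X_b : P) != 0.
Proof.
move=> hab; apply/negP => /eqP e.
have := congr1 (mcoeff U_(a)) e.
rewrite mcoeffB !mcoeffXU eqxx mcoeff0 eq_sym (negPf hab) subr0 => /eqP.
by rewrite oner_eq0.
Qed.

Lemma X_neq0 (a : 'I_n) : ('X_a : P) != 0.
Proof.
apply/negP => /eqP e.
have := congr1 (mcoeff U_(a)) e.
by rewrite mcoeffXU eqxx mcoeff0 => /eqP; rewrite oner_eq0.
Qed.

Lemma cHx i j : (0 < i <= n)%N -> (0 < j <= n)%N -> i != j -> xv n i - xv n j != 0.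
Proof.
move=> hi hj hij.
have [a ea] := xp_in hi; have [b eb] := xp_in hj.
rewrite /xv ea eb !xpX -tofracB tofrac_eq0; apply: X_neq.
by apply: contra hij => /eqP e; rewrite ea eb e.
Qed.

Lemma cHx0 i : (0 < i <= n)%N -> xv n i != 0.
Proof.
move=> hi; have [a ea] := xp_in hi.
by rewrite /xv ea xpX tofrac_eq0 X_neq0.
Qed.

Lemma cHu : cst n tpar != 0.
Proof. by rewrite /cst tofrac_eq0 mpolyC_eq0 tpar_neq0. Qed.

Lemma cHf (f : F) : is_symmetric f -> forall k, (0 < k < n)%N -> @sop n k f = f.
Proof.
move=> hS k hk.
have hk1 : (k.-1 < n)%N by lia.
have hk2 : (k < n)%N by lia.
set sg := tperm (Ordinal hk1) (Ordinal hk2).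
rewrite -[RHS](hS sg) sop_def.
apply: liftF_ext => p.
have e1 : msym sg p = comp_mpoly [tuple tnth [tuple 'X_i | i < n] (sg i) | i < n] p.
  refine (eq_trans (esym (comp_mpoly_id _)) _).
  exact: msym_mPo.
refine (eq_trans _ (esym e1)).
have E : stup k = [tuple tnth [tuple 'X_i | i < n] (sg i) | i < n].
  apply: eq_from_tnth => j.
  refine (eq_trans (stup_nth k j) _).
  refine (eq_trans _ (esym (tnth_mktuple _ j))).
  refine (eq_trans _ (esym (tnth_mktuple _ _))).
  rewrite -xpX.
  congr (xp n _).
  rewrite /sg; case: tpermP => [->|->|h1 h2] /=; rewrite /sw.
  - have -> : (k.-1.+1 == k) = true by apply/eqP; lia.
    by [].
  - have -> : (k.+1 == k) = false by rewrite gtn_eqF.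
    rewrite eqxx; lia.
  - have h1' : (nat_of_ord j != k.-1) by apply/eqP => e; apply: h1; apply: val_inj.
    have h2' : (nat_of_ord j != k) by apply/eqP => e; apply: h2; apply: val_inj.
    have -> : (j.+1 == k) = false by apply/negbTE; apply/eqP; move/eqP: h1'; lia.
    have -> : (j.+1 == k.+1) = false by apply/negbTE; apply/eqP; move/eqP: h2'; lia.
    by [].
exact: (congr1 (fun T => comp_mpoly T p) E).
Qed.

End Conc.

Lemma Yop_conv n i (g : Fx n) : Yop i g = aYop n (@sop n) (@tau n) (xv n) (cst n tpar) i g.
Proof.
have E1 : [seq @Top n k | k <- iota i (n - i)] = [seq aTop (@sop n) (xv n) (cst n tpar) k | k <- iota i (n - i)].
  reflexivity.
have E2 : [seq @Tinv n k | k <- iota 1 i.-1] = [seq aTinv (@sop n) (xv n) (cst n tpar) k | k <- iota 1 i.-1].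
  reflexivity.
have E3 : @omega n = aomega n (@sop n) (@tau n).
  reflexivity.
rewrite /Yop /aYop E1 E2 E3.
reflexivity.
Qed.

Lemma Tijinv_conv n i j (g : Fx n) : Tijinv i j g = aTijinv (@sop n) (xv n) (cst n tpar) i j g.
Proof.
have E1 : [seq @Tinv n k | k <- iota i (j.-1 - i)] = [seq aTinv (@sop n) (xv n) (cst n tpar) k | k <- iota i (j.-1 - i)].
  reflexivity.
have E2 : [seq @Tinv n k | k <- rev (iota i (j.-1 - i))] = [seq aTinv (@sop n) (xv n) (cst n tpar) k | k <- rev (iota i (j.-1 - i))].
  reflexivity.
have E3 : @Tinv n j.-1 = aTinv (@sop n) (xv n) (cst n tpar) j.-1.
  reflexivity.
rewrite /Tijinv /aTijinv E1 E2 E3.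
reflexivity.
Qed.

Lemma Dop_conv n i (g : Fx n) : Dop i g = aDop n (@sop n) (@tau n) (xv n) (cst n tpar) i g.
Proof.
rewrite /Dop /aDop Yop_conv.
have E : \sum_(i.+1 <= j < n.+1) cst n tpar ^+ (j - i) * Tijinv i j (aYop n (@sop n) (@tau n) (xv n) (cst n tpar) i g)
  = \sum_(i.+1 <= j < n.+1) cst n tpar ^+ (j - i) * aTijinv (@sop n) (xv n) (cst n tpar) i j (aYop n (@sop n) (@tau n) (xv n) (cst n tpar) i g).
  apply: eq_bigr => j _; by rewrite Tijinv_conv.
rewrite E.
reflexivity.
Qed.

Lemma Acoef_conv n i m : Acoef n i m = aAcoef n (xv n) (cst n tpar) i m.
Proof. reflexivity. Qed.

Unset Implicit Arguments.
Set Strict Implicit.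

Theorem lemma5p3 (n m : nat) (hm : (1 <= m <= n)%N) (f : Fx n)
  (hL : is_laurent f) (hS : is_symmetric f) :
  \sum_(m <= i < n.+1) Dop i f =
  \sum_(m <= i < n.+1) Acoef n i m * (xv n i)^-1 * (f - tau i f).
Proof.
have hN : (0 < n)%N by lia.
have hm' : (0 < m <= n.+1)%N by apply/andP; split; lia.
have H := (abs_main (@cHs n) (@cHss n) (@cHsc n) (@cHst n) (@cHst' n) (@cHsx n)
  (@cHsu n) (cHt hN) (@cHtu n) (@cHx n) (@cHx0 n) (@cHu n) hN (cHf hS) hm').
refine (eq_trans _ (eq_trans H _)).
  by apply: eq_bigr => i _; exact: Dop_conv.
apply: eq_bigr => i _.
exact: (congr1 (fun c => c * (xv n i)^-1 * (f - tau i f)) (esym (Acoef_conv n i m))).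
Qed.
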